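(* Let $F=\mathbb{F}_q$ be a finite field of odd order $q$, and let $K/F$ be an extension of degree $3$. Then there exists a two-dimensional $F$-linear subspace $V\subset K$ such that whenever $y\in V$ and $y^2\in V$, we have $y=0$. Consequently $|V|=q^2=|K|^{2/3}$, and $V$ contains no $x,y\in K$ with $y\neq0$ such that $x,\,x+y,\,x+y^2\in V$. *)

(* Defs.v *)
From mathcomp Require Export all_boot all_algebra all_field.
Set Implicit Arguments.
Unset Strict Implicit.
Unset Printing Implicit Defensive.

(* Main.v *)
Require Import Defs.
From mathcomp Require Import all_boot all_algebra all_fingroup all_field all_solvable.
From mathcomp Require Import ring.
Import GRing.Theory FinRing.Theory.
From mathcomp Require Import zify.
Lemma arith q : (2 < q -> (q^3 - q^2) * (2*(q-1)) <= q^3*(q-1) -> False)%N.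
Proof.
case: q => [|m] // h3.
rewrite subSS subn0 (expnS _ 2) mulSn addKn.
have : 0 < m.+1 ^ 2 by rewrite expn_gt0.
set X := m.+1 ^ 2 => hX.
have -> : m.+1 * X * m = (m * X) * m.+1 by rewrite mulnC [m.+1 * X]mulnC mulnA.
have mX : 0 < m * X by rewrite muln_gt0 hX andbT; lia.
rewrite leq_pmul2l //; lia.
Qed.

Local Open Scope ring_scope.
Lemma two_neq0 (F : finFieldType) : odd #|F| -> (2%:R : F) != 0.
Proof.
move=> oddF; apply/negP => /eqP h2.
have d2 : (fingroup.order (GRing.one F) %| 2)%N by rewrite order_dvdn zmodXgE h2.
have dF : (fingroup.order (GRing.one F) %| #|F|)%N.
  by rewrite -cardsT (order_dvdG (G := [set: F]%G)) // inE.
have n1 : fingroup.order (GRing.one F) != 1%N by rewrite order_eq1; exact: (oner_neq0 F).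
have o2 : fingroup.order (GRing.one F) = 2%N.
  have := dvdn_leq (isT : (0 < 2)%N) d2; have := order_gt0 (1 : F).
  move: n1 d2; case: (fingroup.order _) => [|[|[|]]] //.
move: dF; rewrite o2 => /dvdn_odd; rewrite oddF => /(_ isT) //.
Qed.

Lemma dim_add_line {F : fieldType} {vT : vectType F} (U : {vspace vT}) v :
  v \notin U -> \dim (U + <[v]>) = (\dim U).+1.
Proof.
move=> vU; have v0 : v != 0 by apply: contraNneq vU => ->; rewrite mem0v.
rewrite dimv_disjoint_sum ?dim_vline ?v0 ?addn1 //.
apply/eqP; rewrite -subv0; apply/subvP => w /memv_capP [wU /vlineP [k wk]].
rewrite memv0; move: wU; rewrite wk; have [->|k0] := eqVneq k 0.
  by rewrite scale0r eqxx.
by move=> /(memvZ k^-1); rewrite scalerA mulVf // scale1r (negPf vU).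
Qed.
Lemma pb {F : fieldType} {L : fieldExtType F} (y : L) : \dim {:L} = 3%N ->
  y \notin 1%VS -> (fullv <= <[1]> + <[y]> + <[y^+2]>)%VS.
Proof.
move=> d3 yF.
have n3 : adjoin_degree 1%AS y = 3%N.
  have := @field_dimS _ _ <<1%AS; y>>%AS {:L}%AS (subvf _).
  rewrite dim_Fadjoin dimv1 muln1 d3.
  have := adjoin_deg_eq1 1%AS y.
  have : (0 < adjoin_degree 1%AS y)%N by [].
  case: (adjoin_degree _ _) => [|[|[|[|]]]] //=.
  by move=> _ h; case/negP: yF; exact: (esym h).
have e : <<1%AS; y>>%VS = fullv.
  by apply/eqP; rewrite eqEdim subvf /= dim_Fadjoin dimv1 n3 d3.
rewrite -e Fadjoin_eq_sum /Fadjoin_sum n3 !big_ord_recr big_ord0 /= !prod1v.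
by rewrite add0v expr0 expr1.
Qed.

Lemma pbc {F : fieldType} {L : fieldExtType F} (y : L) : \dim {:L} = 3%N ->
  y \notin 1%VS -> forall x : L, exists a b c : F,
    x = a%:A + b%:A * y + c%:A * y^+2.
Proof.
move=> d3 yF x; have := subvP (pb _ d3 yF) x (memvf x).
case/memv_addP => _ /memv_addP [_ /vlineP [a ->] [_ /vlineP [b ->] ->]].
move=> [_ /vlineP [c ->] ->]; exists a, b, c.
by rewrite !mulr_algl.
Qed.

Lemma indep {F : fieldType} {L : fieldExtType F} (y : L) : \dim {:L} = 3%N ->
  y \notin 1%VS -> forall a b : F, y^+2 != a%:A + b%:A * y.
Proof.
move=> d3 yF a b; apply/eqP => e.
have : (fullv <= <[1]> + <[y]>)%VS.
  apply/subvP => x _; have [a' [b' [c' ->]]] := pbc _ d3 yF x.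
  rewrite e.
  have h1 : (1 : L) \in (<[1]> + <[y]>)%VS by rewrite (subvP (addvSl _ _)) ?memv_line.
  have hy : y \in (<[1]> + <[y]>)%VS by rewrite (subvP (addvSr _ _)) ?memv_line.
  by rewrite !mulr_algl !(rpredD, rpredZ).
  
move/dimvS; rewrite d3 => h.
have := leq_trans h (dimv_add_leqif _ _).1.
by rewrite !dim_vline oner_neq0; case: (y != 0).
Qed.

Lemma stab {F : fieldType} {L : fieldExtType F} (W : {vspace L}) (e : L) :
  \dim {:L} = 3%N -> \dim W = 2%N -> e \notin 1%VS ->
  (forall w, w \in W -> e * w \in W) -> False.
Proof.
move=> d3 dW eF hW.
set w := vpick W.
have w0 : w != 0 by rewrite vpick0 -dimv_eq0 dW.
have wW : w \in W := memv_pick W.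
have hx : forall x : L, x * w \in W.
  move=> x; have [a [b [c ->]]] := pbc _ d3 eF x.
  rewrite !mulrDl -!mulrA !mulr_algl.
  by rewrite !rpredD ?rpredZ // ?hW // expr2 -mulrA !hW.
have : (fullv <= W)%VS.
  by apply/subvP => z _; rewrite -(divfK w0 z) hx.
by move/dimvS; rewrite d3 dW.
Qed.

Lemma span2 {F : fieldType} {vT : vectType F} (W : {vspace vT}) (u v : vT) :
  \dim W = 2%N -> u \in W -> v \in W -> u != 0 -> v \notin <[u]>%VS ->
  forall w, w \in W -> exists a b : F, w = a *: u + b *: v.
Proof.
move=> dW uW vW u0 vu w wW.
have e : (<[u]> + <[v]>)%VS = W.
  apply/eqP; rewrite eqEdim subv_add -!memvE uW vW /=.
  by rewrite dim_add_line // dim_vline u0 dW.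
move: wW; rewrite -e => /memv_addP [_ /vlineP [a ->] [_ /vlineP [b ->] ->]].
by exists a, b.
Qed.

Definition Pd {F : fieldType} {L : fieldExtType F} (W0 : {vspace L}) (d y : L) :=
  [&& d \notin W0, y != 0, d * y \in W0 & d * y ^+ 2 \in W0].

Lemma notF_of_Pd {F : fieldType} {L : fieldExtType F} (W0 : {vspace L}) d y :
  Pd W0 d y -> y \notin 1%VS.
Proof.
case/and4P => dW y0 dy _; apply/negP => /vlineP [c yc].
have c0 : c != 0 by apply: contraNneq y0 => c0; rewrite yc c0 scale0r.
move: dy; rewrite yc -scalerAr mulr1 => /(memvZ c^-1).
by rewrite scalerA mulVf // scale1r (negPf dW).
Qed.

Lemma upper {F : fieldType} {L : fieldExtType F} (W0 : {vspace L}) d1 d y :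
  \dim {:L} = 3%N -> \dim W0 = 2%N -> Pd W0 d1 y -> Pd W0 d y ->
  exists a : F, d = a *: d1.
Proof.
move=> d3 dW0 P1 P2; have yF := @notF_of_Pd _ _ W0 d1 y P1.
case/and4P: P1 => d1W y0 d1y d1y2; case/and4P: P2 => dW _ dy dy2.
have d10 : d1 != 0 by apply: contraNneq d1W => ->; rewrite mem0v.
have u0 : d1 * y != 0 by rewrite mulf_neq0.
have vu : d1 * y ^+ 2 \notin <[d1 * y]>%VS.
  apply/negP => /vlineP [k hk].
  have : y ^+ 2 = 0%:A + k%:A * y.
    apply: (mulfI d10); rewrite hk scale0r add0r mulr_algl scalerAr //.
  by move/eqP; rewrite (negPf (indep y d3 yF 0 k)).
set e := d / d1.
have he : forall w, w \in W0 -> e * w \in W0.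
  move=> w /(@span2 _ _ W0 _ _ dW0 d1y d1y2 u0 vu w) [a [b ->]].
  rewrite mulrDr -!scalerAr !mulrA /e !divfK //.
  by rewrite -(mulrA d) -expr2 rpredD // rpredZ.
have [/vlineP [a ea]|eF] := boolP (e \in 1%VS).
  by exists a; rewrite -(divfK d10 d) -/e ea -scalerAl mul1r.
by case: (@stab _ _ W0 e d3 dW0 eF he).
Qed.

Lemma lower {F : finFieldType} {K : fieldExtType F}
  (V : {vspace finvect_type K}) (y0 : finvect_type K) :
  \dim {:finvect_type K} = 3%N -> \dim V = 2%N -> (1 \notin V) ->
  (2%:R : F) != 0 -> y0 != 0 -> y0 \in V -> y0 ^+ 2 \in V ->
  (2 * (#|F| - 1) <=
     #|[set y : finvect_type K | [&& y != 0%R, y \in V & (y ^+ 2)%R \in V]]|)%N.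
Proof.
move=> d3 dV V1 two0 y00 y0V y02V.
have y0F : y0 \notin 1%VS.
  apply/negP => /vlineP [c yc].
  have c0 : c != 0 by apply: contraNneq y00 => c0; rewrite yc c0 scale0r.
  move: y0V; rewrite yc => /(memvZ c^-1).
  by rewrite scalerA mulVf // scale1r (negPf V1).
have alg0 : forall a : F, a%:A \in V -> a = 0.
  move=> a aV; apply/eqP; apply: contraNT V1 => a0.
  by move: aV => /(memvZ a^-1); rewrite scalerA mulVf // scale1r.
have y03 : y0 ^+ 3 \notin V.
  apply/negP => y03V.
  have [a [b [c e]]] := pbc _ d3 y0F (y0 ^+ 3).
  have a0 : a = 0.
    apply: alg0.
    have -> : a%:A = y0 ^+ 3 - b%:A * y0 - c%:A * y0 ^+ 2 by rewrite e; ring.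
    by rewrite !mulr_algl !rpredB // rpredZ.
  have : y0 * (y0 ^+ 2 - (b%:A + c%:A * y0)) = 0.
    have -> : y0 * (y0 ^+ 2 - (b%:A + c%:A * y0)) =
       y0 ^+ 3 - (b%:A * y0 + c%:A * y0 ^+ 2) by ring.
    by rewrite e a0 scale0r add0r subrr.
  move/eqP; rewrite mulf_eq0 (negPf y00) /= subr_eq0.
  by rewrite (negPf (indep y0 d3 y0F b c)).
have efull : (V + <[y0 ^+ 3]>)%VS = fullv.
  by apply/eqP; rewrite eqEdim subvf d3 dim_add_line // dV.
have : y0 ^+ 4 \in (V + <[y0 ^+ 3]>)%VS by rewrite efull memvf.
case/memv_addP => v vV [_ /vlineP [s ->] e4].
pose t : F := - (s / 2%:R).
have hst : s%:A + 2%:R * t%:A = 0 :> finvect_type K.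
  have hF : s + 2%:R * t = 0 by rewrite /t mulrN mulrC divfK // subrr.
  by rewrite mulr_natl scalerMnl -mulr_natl -scalerDl hF scale0r.
pose z := y0 ^+ 2 + t%:A * y0.
have zV : z \in V by rewrite /z mulr_algl rpredD // rpredZ.
have z2V : z ^+ 2 \in V.
  have -> : z ^+ 2 = y0 ^+ 4 + 2%:R * t%:A * y0 ^+ 3 + t%:A ^+ 2 * y0 ^+ 2.
    by rewrite /z; ring.
  rewrite e4 -[s *: _]mulr_algl.
  have -> : v + s%:A * y0 ^+ 3 + 2%:R * t%:A * y0 ^+ 3 + t%:A ^+ 2 * y0 ^+ 2
     = v + (s%:A + 2%:R * t%:A) * y0 ^+ 3 + t%:A ^+ 2 * y0 ^+ 2 by ring.
  by rewrite hst mul0r addr0 expr2 -mulrA !mulr_algl rpredD // !rpredZ.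
have z0 : z != 0.
  apply/negP => /eqP hz.
  have : y0 ^+ 2 = 0%:A + (- t)%:A * y0.
    by rewrite scale0r add0r scaleNr mulNr; apply/eqP; rewrite -subr_eq0 opprK; apply/eqP; exact: hz.
  by apply/eqP; rewrite indep.
pose g (p : bool * F) := p.2 *: (if p.1 then y0 else z).
pose D := setX [set: bool] [set~ (0 : F)].
have cD : #|D| = (2 * (#|F| - 1))%N by rewrite cardsX cardsT card_bool cardsC1 subn1.
rewrite -cD -(@card_in_imset _ _ g D).
  apply: subset_leq_card; apply/subsetP => _ /imsetP [[b a] + ->].
  rewrite !inE /= => a0; rewrite /g /=.
  case: b => /=; rewrite scaler_eq0 (negPf a0) /= exprZn.
    by rewrite y00 !rpredZ.
  by rewrite z0 !rpredZ.
have key : forall a a' : F, a != 0 -> a' != 0 -> a *: y0 != a' *: z.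
  move=> a a' a0 a'0; apply/eqP => h.
  have : y0 ^+ 2 = 0%:A + (a / a' - t)%:A * y0.
    have hz : z = (a / a')%:A * y0.
      by rewrite mulr_algl mulrC -scalerA h scalerA mulVf // scale1r.
    rewrite scale0r add0r.
    have -> : y0 ^+ 2 = z - t%:A * y0 by rewrite /z addrK.
    by rewrite hz -mulrBl -scalerBl.
  by apply/eqP; rewrite indep.
move=> [b a] [b' a']; rewrite !inE /= => a0 a'0; rewrite /g /=.
case: b; case: b' => /= h.
- by congr (_, _); apply/eqP; rewrite -subr_eq0 -(orbF (a - a' == 0)) -(negPf y00) -scaler_eq0 scalerBl h subrr.
- by case/eqP: (key _ _ a0 a'0).
- by case/eqP: (key _ _ a'0 a0); rewrite h.
- by congr (_, _); apply/eqP; rewrite -subr_eq0 -(orbF (a - a' == 0)) -(negPf z0) -scaler_eq0 scalerBl h subrr.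
Qed.

From mathcomp Require Import zify.


Theorem theorem5p1 (F : finFieldType) (K : fieldExtType F) :
  odd #|F| -> \dim {: K}%VS = 3%N ->
  exists V : {vspace finvect_type K},
    [/\ \dim V = 2%N,
        (forall y : finvect_type K, y \in V -> y ^+ 2 \in V -> y = 0),
        #|V| = (#|F| ^ 2)%N,
        (#|V| ^ 3 = #|finvect_type K| ^ 2)%N
      & (forall x y : finvect_type K, y != 0 ->
           ~ [/\ x \in V, x + y \in V & x + y ^+ 2 \in V])].
Proof.
move=> oddF d3'.
have d3 : \dim {: finvect_type K}%VS = 3%N := d3'.
have two0 := two_neq0 _ oddF.
have q3 : (3 <= #|F|)%N.
  by move: (finNzRing_gt1 F) oddF; case: #|F| => [|[|[|]]].
have cardL : #|finvect_type K| = (#|F| ^ 3)%N.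
  by have := card_vspace (fullv : {vspace finvect_type K}); rewrite card_vspacef d3.
have [al _ alF] : exists2 al : finvect_type K, al \in fullv & al \notin 1%VS.
  by apply/subvPn; apply/negP => /dimvS; rewrite d3 dimv1.
pose W0 := (<[1]> + <[al]>)%VS.
have dW0 : \dim W0 = 2%N by rewrite dim_add_line // dimv1.
have memVd : forall d x : finvect_type K, d != 0 ->
    (x \in (W0 * <[d^-1]>)%VS) = (d * x \in W0).
  move=> d x d0; apply/memv_cosetP/idP => [[w wW ->] | h].
    by rewrite mulrC divfK.
  by exists (d * x) => //; rewrite mulrC mulKf.
have dVd : forall d : finvect_type K, d != 0 -> \dim (W0 * <[d^-1]>)%VS = 2%N.
  by move=> d d0; rewrite dim_cosetv ?invr_neq0.
case: (boolP [exists d : finvect_type K,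
          (d \notin W0) && [forall y : finvect_type K, ~~ Pd W0 d y]]).
  case/existsP => d /andP [dW /forallP hP].
  have d0 : d != 0 by apply: contraNneq dW => ->; rewrite mem0v.
  have aniso : forall y : finvect_type K, y \in (W0 * <[d^-1]>)%VS ->
      y ^+ 2 \in (W0 * <[d^-1]>)%VS -> y = 0.
    move=> y yV y2V; have := hP y.
    rewrite /Pd dW -!memVd // yV y2V /= andbT negbK.
    by move/eqP.
  exists (W0 * <[d^-1]>)%VS; split => //.
  - by rewrite dVd.
  - by rewrite card_vspace dVd.
  - rewrite card_vspace dVd // -expnM; have -> : #|finvect_type K| = (#|F| ^ 3)%N by have := card_vspace (fullv : {vspace finvect_type K}); rewrite card_vspacef d3.
    by rewrite -expnM.
  move=> x y y0 [xV xyV xy2V]; move/eqP: y0; apply.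
  apply: aniso.
    by rewrite -(addKr x y) rpredD // rpredN.
  by rewrite -(addKr x (y ^+ 2)) rpredD // rpredN.
rewrite negb_exists => /forallP hall.
exfalso.
have bad : forall d, d \notin W0 -> exists y, Pd W0 d y.
  move=> d dW; have := hall d; rewrite negb_and dW /= negb_forall.
  by case/existsP => y; rewrite negbK; exists y.
set q := #|F|.
have low : forall d, d \notin W0 ->
    (2 * (q - 1) <= #|[set y | Pd W0 d y]|)%N.
  move=> d dW; have d0 : d != 0 by apply: contraNneq dW => ->; rewrite mem0v.
  have [y0 Py0] := bad d dW.
  case/and4P: (Py0) => _ y00 dy0 dy02.
  have := @lower F K (W0 * <[d^-1]>)%VS y0 d3 (dVd d d0) _ two0 y00.
  rewrite !memVd // mulr1 dW dy0 dy02 => /(_ isT isT isT).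
  congr (_ <= _)%N; apply: eq_card => y; rewrite !inE /Pd dW !memVd //.
have up : forall y, (#|[set d | Pd W0 d y]| <= q - 1)%N.
  move=> y; case: (pickP (fun d => Pd W0 d y)) => [d1 P1 | none].
    apply: (@leq_trans #|(fun a : F => a *: d1) @: [set~ (0 : F)]|).
      apply/subset_leq_card/subsetP => d; rewrite inE => Pd'.
      have [a ea] := @upper _ _ W0 d1 d y d3 dW0 P1 Pd'.
      apply/imsetP; exists a => //; rewrite !inE.
      apply: contraTneq Pd' => a0; rewrite /Pd ea a0 scale0r mem0v.
      by [].
    by rewrite (leq_trans (leq_imset_card _ _)) // cardsC1 subn1.
  by rewrite (_ : [set d | Pd W0 d y] = set0) ?cards0 //; apply/setP => d; rewrite !inE none.
have cnt : forall (P : pred (finvect_type K)), #|[set x | P x]| = (\sum_x (P x : nat))%N.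
  move=> P; rewrite -sum1dep_card big_mkcond; apply: eq_bigr => x _.
  by case: (P x).
have e1 : (\sum_d #|[set y | Pd W0 d y]| = \sum_y #|[set d | Pd W0 d y]|)%N.
  rewrite (eq_bigr _ (fun d _ => cnt (fun y => Pd W0 d y))).
  rewrite exchange_big; apply: eq_bigr => y _; by rewrite cnt.
have L1 : ((#|F| ^ 3 - #|F| ^ 2) * (2 * (q - 1)) <= \sum_d #|[set y | Pd W0 d y]|)%N.
  rewrite (bigID (fun d => d \in W0)) /=.
  apply: leq_trans (leq_addl _ _).
  apply: (@leq_trans (\sum_(d | d \notin W0) (2 * (q - 1)))%N); last exact: leq_sum low.
  rewrite sum_nat_cond_const leq_mul2r; apply/orP; right.
  have := cardsC [set d : finvect_type K | d \in W0].
  rewrite cardL cardsE card_vspace dW0 => <-.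
  rewrite addKn; apply/eq_leq/eq_card => d; rewrite !inE.
  by [].
have L2 : (\sum_y #|[set d | Pd W0 d y]| <= #|F| ^ 3 * (q - 1))%N.
  apply: (@leq_trans (\sum_(y : finvect_type K) (q - 1))%N); first exact: leq_sum (fun y _ => up y).
  by rewrite sum_nat_const cardT -cardE cardL.
move: (leq_trans L1 (leq_trans (eq_leq e1) L2)).
exact: arith q3.
Qed.
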